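(* Let $G=(V,E)$ be a finite simple graph of order $n$ and let $(x,z)$ be an optimal solution of the Fort Number Model $\mathrm{FN}(G)$. Then $\mathrm{ft}(G)=\sum_{i=1}^n z_i$.
   Context: $N(u)$ denotes the neighborhood of $u$. A fort of $G$ is a non-empty set $F\subseteq V$ such that no vertex $u\in V\setminus F$ has exactly one neighbor in $F$. The fort number $\mathrm{ft}(G)$ is the maximum cardinality of a collection of pairwise disjoint forts of $G$. The Fort Number Model $\mathrm{FN}(G)$ has binary variables $x_{iv}$ ($i\in\{1,\dots,n\}$, $v\in V$) and $z_i$ ($i\in\{1,\dots,n\}$), with constraints: $z_i-\sum_{u\in V}x_{iu}\leq0$ for all $i$; $x_{iu}-x_{iv}+\sum_{w\in N(u)\setminus\{v\}}x_{iw}\geq0$ for all $i$, all $v\in V$ and all $u\in N(v)$; $\sum_{i=1}^n x_{iu}\leq1$ for all $u\in V$; its objective is to maximize $\sum_{i=1}^n z_i$. *)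

(* Defs.v *)
From mathcomp Require Import all_boot all_order.
Set Implicit Arguments. Unset Strict Implicit. Unset Printing Implicit Defensive.

Definition simple_graph (T : finType) (e : rel T) : Prop :=
  symmetric e /\ irreflexive e.

Definition nbhd (T : finType) (e : rel T) (u : T) : {set T} := [set w | e u w].

Definition fort (T : finType) (e : rel T) (F : {set T}) : bool :=
  (F != set0) && [forall u, (u \notin F) ==> (#|nbhd e u :&: F| != 1)].

Definition disjoint_forts (T : finType) (e : rel T) (P : {set {set T}}) : bool :=
  [forall F in P, fort e F] && trivIset P.

Definition fort_number (T : finType) (e : rel T) : nat :=
  \max_(P : {set {set T}} | disjoint_forts e P) #|P|.

(* Feasibility for the Fort Number Model FN(G), with n = #|T|;
   binary variables x_{iv} and z_i are booleans (coerced to 0/1 in nat). *)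
Definition FN_feasible (T : finType) (e : rel T)
    (x : 'I_#|T| -> T -> bool) (z : 'I_#|T| -> bool) : Prop :=
  (forall i : 'I_#|T|, (z i <= \sum_(u : T) x i u)%N) /\
  (forall (i : 'I_#|T|) (v u : T), e v u ->
      (x i v <= x i u + \sum_(w : T | e u w && (w != v)) x i w)%N) /\
  (forall u : T, (\sum_(i < #|T|) x i u <= 1)%N).

Definition FN_objective (T : finType) (z : 'I_#|T| -> bool) : nat :=
  \sum_(i < #|T|) z i.

Definition FN_optimal (T : finType) (e : rel T)
    (x : 'I_#|T| -> T -> bool) (z : 'I_#|T| -> bool) : Prop :=
  FN_feasible e x z /\
  (forall x' z', FN_feasible e x' z' -> (FN_objective z' <= FN_objective z)%N).

(* Main.v *)
Require Import Defs.
From mathcomp Require Import all_boot all_order.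
From mathcomp Require Import zify.

Lemma sumb_card (I : finType) (P : pred I) (b : I -> bool) :
  \sum_(i | P i) (b i : nat) = #|[set i | P i && b i]|.
Proof.
rewrite -sum1_card big_mkcond [RHS]big_mkcond; apply: eq_bigr => i _.
by rewrite inE; case: (P i); case: (b i).
Qed.

Lemma sumb_card1 (I : finType) (b : I -> bool) :
  \sum_(i : I) (b i : nat) = #|[set i | b i]|.
Proof. by rewrite sumb_card; apply: eq_card => i; rewrite !inE. Qed.

Lemma sum_ltk n k : \sum_(i < n) ((i < k : bool) : nat) = minn k n.
Proof.
elim: n => [|n IH]; first by rewrite big_ord0; lia.
rewrite big_ord_recr /= IH; case: ltnP => H /=; lia.
Qed.

Section S.
Variables (T : finType) (e : rel T) (He : simple_graph e).

Lemma feasible_le (x : 'I_#|T| -> T -> bool) (z : 'I_#|T| -> bool) :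
  FN_feasible e x z -> FN_objective z <= fort_number e.
Proof.
case=> [Hz [Hc Hs]].
pose F i := [set v | x i v].
have disj : forall i j u, x i u -> x j u -> i = j.
  move=> i j u Hi Hj; apply/eqP; apply/negPn/negP => Hij.
  have := Hs u; rewrite (bigD1 i) // (bigD1 j) /=; last by rewrite eq_sym Hij.
  by rewrite Hi Hj.
have ne : forall i, z i -> exists v, x i v.
  move=> i zi; have := Hz i; rewrite zi sumb_card1 card_gt0 => /set0Pn [v].
  by rewrite inE; exists v.
have fortF : forall i, z i -> fort e (F i).
  move=> i zi; apply/andP; split.
    by apply/set0Pn; have [v Hv] := ne i zi; exists v; rewrite inE.
  apply/forallP => u; apply/implyP; rewrite inE => Hu; apply/negP => /cards1P [v Hv].
  have : v \in nbhd e u :&: F i by rewrite Hv set11.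
  rewrite !inE => /andP [euv xiv].
  have := Hc i v u; rewrite (negbTE Hu) xiv.
  case: He => [sym _]; rewrite sym => /(_ euv).
  rewrite big1 // => w /andP [euw wv]; apply/eqP; rewrite eqb0; apply/negP => xiw.
  have : w \in nbhd e u :&: F i by rewrite !inE euw xiw.
  by rewrite Hv inE (negbTE wv).
pose P := [set F i | i in [set i | z i]].
have cardP : #|P| = FN_objective z.
  rewrite /FN_objective sumb_card1 card_in_imset //.
  move=> i j; rewrite !inE => zi zj /setP Fij.
  have [v Hv] := ne i zi; apply: (disj _ _ v) => //.
  by have := Fij v; rewrite !inE Hv.
rewrite -cardP; apply: leq_bigmax_cond; apply/andP; split.
  by apply/forallP => A; apply/implyP => /imsetP [i]; rewrite inE => zi ->; apply: fortF.
apply/trivIsetP => A B /imsetP [i _ ->] /imsetP [j _ ->] Fij.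
apply/pred0P => v /=; apply/negP; rewrite !inE => /andP [xi xj].
by move: Fij; rewrite (disj _ _ _ xi xj) eqxx.
Qed.

Lemma le_feasible (P : {set {set T}}) : disjoint_forts e P ->
  exists x z, FN_feasible e x z /\ FN_objective z = #|P|.
Proof.
case/andP => /forallP Hf Htr.
have Hf' : forall A, A \in P -> fort e A by move=> A; move/implyP: (Hf A).
have Pn : #|P| <= #|T|.
  move/trivIsetP: (Htr) => _.
  have := Htr; rewrite /trivIset => /eqP Hc.
  apply: (leq_trans _ (max_card (cover P))); rewrite -Hc -sum1_card.
  apply: leq_sum => A /Hf' /andP [ne _]; by rewrite card_gt0.
pose s := enum P.
have ss : size s = #|P| by rewrite cardE.
pose x (i : 'I_#|T|) v := v \in nth set0 s i.
pose z (i : 'I_#|T|) := i < #|P|.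
have inP : forall (i : nat) v, v \in nth set0 s i -> i < size s /\ nth set0 s i \in P.
  move=> i v; case: (ltnP i (size s)) => H; last by rewrite nth_default // inE.
  by move=> _; split => //; rewrite -mem_enum mem_nth.
exists x, z; split; last by rewrite /FN_objective sum_ltk; lia.
split; [|split].
- move=> i; rewrite /z; case: ltnP => //= H.
  have Ai : nth set0 s i \in P by rewrite -mem_enum mem_nth // ss.
  have /andP [ne _] := Hf' _ Ai.
  by rewrite sumb_card1 card_gt0; case/set0Pn: ne => v Hv; apply/set0Pn; exists v; rewrite inE.
- move=> i v u evu; rewrite /x; case Hv: (v \in _) => //.
  case Hu: (u \in _) => //=.
  have [_ A] := inP _ _ Hv.
  have /andP [_ /forallP /(_ u)] := Hf' _ A; rewrite Hu /= => H1.
  rewrite sumb_card.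
  have -> : [set w | e u w && (w != v) && (w \in nth set0 s i)] = (nbhd e u :&: nth set0 s i) :\ v.
    by apply/setP => w; rewrite !inE; case: (e u w); case: (w != v).
  have := cardsD1 v (nbhd e u :&: nth set0 s i).
  case: He => [sym _].
  rewrite !inE -sym evu Hv /=.
  move: H1; case: #|_| => [|[|k]] //=; lia.
- move=> u; rewrite sumb_card1; apply/card_le1_eqP => i j; rewrite !inE /x => Hi Hj.
  have [si Ai] := inP _ _ Hi; have [sj Aj] := inP _ _ Hj.
  apply: ord_inj; apply/eqP; rewrite -(nth_uniq set0 sj si (enum_uniq _)); apply/negPn/negP => Hne.
  move/trivIsetP: Htr => /(_ _ _ Aj Ai Hne) /pred0P /(_ u) /=.
  by rewrite Hi Hj.
Qed.

End S.

Theorem corollary7p3 (T : finType) (e : rel T) (He : simple_graph e)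
    (x : 'I_#|T| -> T -> bool) (z : 'I_#|T| -> bool) :
  FN_optimal e x z -> fort_number e = \sum_(i < #|T|) z i.
Proof.
case=> Hf Hopt; apply/eqP; rewrite eqn_leq; apply/andP; split.
  apply/bigmax_leqP => P HP.
  have [x' [z' [Hf' <-]]] := @le_feasible _ _ He _ HP.
  exact: (Hopt _ _ Hf').
exact: (@feasible_le _ _ He _ _ Hf).
Qed.
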